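(* Let $n\ge 1$ be an integer and let $a,b,c:\{0,1,\dots,n+1\}\to\mathbb{R}$ with $a(k)\neq 0$ and $c(k)\neq 0$ for $k=0,\dots,n$. Let $\Phi_{a,b,c},\Psi_{a,b,c}:\{0,\dots,n+1\}\to\mathbb{R}$ be the unique solutions of the homogeneous equation $$-a(k)u(k+1)+b(k)u(k)-c(k-1)u(k-1)=0,\qquad k=1,\dots,n,$$ determined respectively by $\Phi_{a,b,c}(0)=a(0)$, $\Phi_{a,b,c}(1)=b(0)$, and by $\Psi_{a,b,c}(n)=b(n+1)$, $\Psi_{a,b,c}(n+1)=c(n)$. Then for every $k=0,\dots,n+1$, $$\Phi_{a,b,c}(k)=a(0)\Big(\prod_{s=0}^{k-1}a(s)\Big)^{-1}\Phi_{\mathsf J}(k),\qquad \Psi_{a,b,c}(k)=c(n)\Big(\prod_{s=k}^{n}c(s)\Big)^{-1}\Psi_{\mathsf J}(k),$$ and moreover $$b(0)\Psi_{a,b,c}(0)-a(0)\Psi_{a,b,c}(1)=D_{\mathsf J}\Big(\prod_{s=0}^{n-1}c(s)\Big)^{-1}.$$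
   Context: Empty products equal $1$ and empty sums equal $0$. For $m\in\mathbb{N}$ and a sequence $x$, the shift $x_m$ is $x_m(j)=x(j+m)$; $ac$ denotes the pointwise product $(ac)(j)=a(j)c(j)$. Chebyshev functions: for sequences $x,y$ set $P_{-1}(x,y)=0$, $P_0(x,y)=1$, and for $k\ge1$ $$P_k(x,y)=\sum_{m=0}^{\lfloor k/2\rfloor}(-1)^m\sum_{\alpha\in\ell_k^m}x^{\bar\alpha}y^{\alpha},$$ where: for $\alpha=(\alpha_1,\dots,\alpha_k)\in\{0,1\}^k$, $x^\alpha=\prod_{j=1}^k x(j)^{\alpha_j}$ and $|\alpha|=\sum_j\alpha_j$; $\ell_k^0=\{(0,\dots,0)\}$; for $m\ge1$, $\ell_k^m$ is the set of $\alpha\in\{0,1\}^k$ with $\alpha_k=0$, $|\alpha|=m$, and whose positions of ones $i_1<\dots<i_m$ satisfy $i_{j+1}-i_j\ge2$ for $j=1,\dots,m-1$; and $\bar\alpha\in\{0,1\}^k$ is defined by $\bar\alpha_{i_j}=\bar\alpha_{i_j+1}=0$ for $j=1,\dots,m$ and $\bar\alpha_i=1$ otherwise. Define $\Phi_{\mathsf J}(0)=1$, $\Phi_{\mathsf J}(k)=b(0)P_{k-1}(b,ac)-a(0)c(0)P_{k-2}(b_1,a_1c_1)$ for $k=1,\dots,n+1$; $\Psi_{\mathsf J}(k)=b(n+1)P_{n-k}(b_k,a_kc_k)-a(n)c(n)P_{n-k-1}(b_k,a_kc_k)$ for $k=0,\dots,n$, and $\Psi_{\mathsf J}(n+1)=1$;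 $D_{\mathsf J}=b(0)\big[b(n+1)P_n(b,ac)-a(n)c(n)P_{n-1}(b,ac)\big]-a(0)c(0)\big[b(n+1)P_{n-1}(b_1,a_1c_1)-a(n)c(n)P_{n-2}(b_1,a_1c_1)\big]$. *)

(* Defs.v *)
From HB Require Import structures.
From mathcomp Require Import all_boot all_order all_algebra.
Set Implicit Arguments. Unset Strict Implicit. Unset Printing Implicit Defensive.
Import Order.TTheory GRing.Theory Num.Theory.
Local Open Scope ring_scope.

Section Cheb.
Variable R : comRingType.

Definition shiftseq (x : nat -> R) (m : nat) : nat -> R := fun j => x (j + m)%N.
Definition pwmul (x y : nat -> R) : nat -> R := fun j => x j * y j.

(* A multi-index alpha in {0,1}^k is represented by its set of ones
   A : {set 'I_k}; the 0-based index i corresponds to position i+1. *)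
Definition ell (k m : nat) : {set {set 'I_k}} :=
  if m == 0%N then [set set0]
  else [set A : {set 'I_k} |
          [&& [forall i in A, (i : nat) != k.-1],
              #|A| == m &
              [forall i in A, forall j in A, (i < j)%N ==> (i.+1 < j)%N]]].

Definition barset (k : nat) (A : {set 'I_k}) : {set 'I_k} :=
  [set i : 'I_k | [forall j in A, (i != j) && ((i : nat) != j.+1)]].

Definition mpow (k : nat) (x : nat -> R) (A : {set 'I_k}) : R :=
  \prod_(i in A) x (i.+1).

Definition chebN (k : nat) (x y : nat -> R) : R :=
  \sum_(0 <= m < (k./2).+1)
     (-1) ^+ m * \sum_(A in ell k m) mpow x (barset A) * mpow y A.

(* P_k for integer k: P_{-1} = 0 (only negative index that occurs) *)
Definition cheb (k : int) (x y : nat -> R) : R :=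
  match k with Posz k' => chebN k' x y | Negz _ => 0 end.

Definition PhiJ (a b c : nat -> R) (k : nat) : R :=
  if k == 0%N then 1
  else b 0%N * cheb (k%:Z - 1) b (pwmul a c)
       - a 0%N * c 0%N * cheb (k%:Z - 2) (shiftseq b 1) (shiftseq (pwmul a c) 1).

Definition PsiJ (n : nat) (a b c : nat -> R) (k : nat) : R :=
  if k == n.+1 then 1
  else b n.+1 * cheb (n%:Z - k%:Z) (shiftseq b k) (shiftseq (pwmul a c) k)
       - a n * c n * cheb (n%:Z - k%:Z - 1) (shiftseq b k) (shiftseq (pwmul a c) k).

Definition DJ (n : nat) (a b c : nat -> R) : R :=
  b 0%N * (b n.+1 * cheb n%:Z b (pwmul a c) - a n * c n * cheb (n%:Z - 1) b (pwmul a c))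
  - a 0%N * c 0%N * (b n.+1 * cheb (n%:Z - 1) (shiftseq b 1) (shiftseq (pwmul a c) 1)
                     - a n * c n * cheb (n%:Z - 2) (shiftseq b 1) (shiftseq (pwmul a c) 1)).
End Cheb.

(* Main.v *)
Require Import Defs.
From HB Require Import structures.
From mathcomp Require Import all_boot all_order all_algebra.
From mathcomp Require Import ring zify.
From Stdlib Require Import FunctionalExtensionality.
Import Order.TTheory GRing.Theory Num.Theory.
Local Open Scope ring_scope.
Set Implicit Arguments. Unset Strict Implicit. Unset Printing Implicit Defensive.

Section Comb.
Variable R : comRingType.
Implicit Types (x y : nat -> R) (p q : nat -> bool).

Definition pn k (A : {set 'I_k}) (i : nat) : bool := [exists j in A, val j == i].
Definition adj k p := \big[andb/true]_(0 <= i < k) (p i ==> ~~ p i.+1).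
Definition validn k p := \big[andb/true]_(0 <= i < k) (p i ==> ((i.+1 < k)%N && ~~ p i.+1)).
Definition nbar p i := ~~ p i && ((i == 0)%N || ~~ p i.-1).
Definition cnt k p := (\sum_(0 <= i < k) (p i : nat))%N.
Definition Xp k x p := \prod_(0 <= i < k) (if nbar p i then x i.+1 else 1).
Definition Yp k y p := \prod_(0 <= i < k) (if p i then y i.+1 else 1).
Definition Wt k x y p : R :=
  if validn k p then (-1) ^+ cnt k p * Xp k x p * Yp k y p else 0.

Lemma pn_ord k (A : {set 'I_k}) (i : 'I_k) : pn A i = (i \in A).
Proof.
apply/existsP/idP => [[j /andP[jA /eqP /val_inj <-]] //|iA].
by exists i; rewrite iA eqxx.
Qed.

Lemma pn_ge k (A : {set 'I_k}) i : (k <= i)%N -> pn A i = false.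
Proof.
move=> ki; apply/existsP => -[j /andP[_ /eqP e]].
by have := ltn_ord j; rewrite e ltnNge ki.
Qed.

Lemma validnP k p :
  reflect (forall i, (i < k)%N -> p i -> (i.+1 < k)%N && ~~ p i.+1) (validn k p).
Proof.
rewrite /validn big_all; apply: (iffP allP) => H i.
  by move=> ik; apply/implyP/H; rewrite mem_index_iota.
by rewrite mem_index_iota => /andP[_ ik]; apply/implyP/H.
Qed.

Lemma validS0 k : validn k (fun _ => false).
Proof. by apply/validnP. Qed.

Lemma validSE k (A : {set 'I_k}) :
  ([forall i in A, (i : nat) != k.-1] &&
   [forall i in A, forall j in A, (i < j)%N ==> (i.+1 < j)%N]) = validn k (pn A).
Proof.
apply/andP/validnP.
- move=> [/forall_inP H1 /forall_inP H2] i ik.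
  have := pn_ord A (Ordinal ik); rewrite /= => -> iA; apply/andP; split.
    by have /= := H1 _ iA; lia.
  apply/negP => /existsP [j /andP[jA /eqP e]].
  have /forall_inP /(_ j jA) := H2 _ iA.
  by rewrite /= e ltnSn ltnn.
- move=> H; split; apply/forall_inP => i iA.
    have := H i (ltn_ord i); rewrite pn_ord iA => /(_ isT) /andP[lt _].
    by move: lt; lia.
  apply/forall_inP => j jA; apply/implyP => ij.
  have /andP[_ ni] : (i.+1 < k)%N && ~~ pn A i.+1 by apply: H; rewrite ?pn_ord.
  rewrite ltn_neqAle ij andbT; apply: contra ni => /eqP e.
  by apply/existsP; exists j; rewrite jA e eqxx.
Qed.

Lemma barsetE k (A : {set 'I_k}) (i : 'I_k) :
  (i \in barset A) = nbar (pn A) i.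
Proof.
rewrite inE /nbar; apply/forall_inP/andP.
- move=> H; split.
    apply/existsP => -[j /andP[jA /eqP e]].
    by have := H j jA; rewrite (val_inj e) eqxx.
  have [i0|ipos] := posnP i; first by rewrite i0.
  apply/orP; right; apply/existsP => -[j /andP[jA /eqP e]].
  by have := H j jA; rewrite e prednK // eqxx andbF.
- move=> [ni H2] j jA; apply/andP; split.
    by apply: contraNneq ni => ->; rewrite pn_ord.
  apply/eqP => e; move: H2; rewrite e /= pn_ord jA //.
Qed.

Lemma mpow_bar k x (A : {set 'I_k}) :
  mpow x (barset A) = Xp k x (pn A).
Proof.
rewrite /mpow /Xp big_mkcond big_mkord; apply: eq_bigr => i _.
by rewrite barsetE.
Qed.

Lemma mpow_A k y (A : {set 'I_k}) : mpow y A = Yp k y (pn A).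
Proof.
rewrite /mpow /Yp big_mkcond big_mkord; apply: eq_bigr => i _.
by rewrite pn_ord.
Qed.

Lemma card_cnt k (A : {set 'I_k}) : #|A| = cnt k (pn A).
Proof.
rewrite /cnt -sum1_card big_mkcond big_mkord; apply: eq_bigr => i _.
by rewrite pn_ord; case: (i \in A).
Qed.

Lemma validS k p : validn k.+1 p = adj k p && ~~ p k.
Proof.
rewrite /validn /adj big_nat_recr //= ltnn andFb implybF; congr (_ && _).
by apply: eq_big_nat => i /andP[_ ik]; rewrite ltnS ik.
Qed.

Lemma adjS k p : adj k.+1 p = adj k p && (p k ==> ~~ p k.+1).
Proof. by rewrite /adj big_nat_recr. Qed.

Lemma cntS k p : cnt k.+1 p = (cnt k p + p k)%N.
Proof. by rewrite /cnt big_nat_recr. Qed.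

Lemma XpS k x p : Xp k.+1 x p = Xp k x p * (if nbar p k then x k.+1 else 1).
Proof. by rewrite /Xp big_nat_recr. Qed.

Lemma YpS k y p : Yp k.+1 y p = Yp k y p * (if p k then y k.+1 else 1).
Proof. by rewrite /Yp big_nat_recr. Qed.

Lemma cnt_bound k p : validn k p -> (2 * cnt k p <= k)%N.
Proof.
elim: k {-2}k (leqnn k) p => [|K IH] k kK p.
  by move: kK; rewrite leqn0 => /eqP ->; rewrite /cnt big_geq.
case: k kK => [|[|k]] kK.
- by rewrite /cnt big_geq.
- by rewrite validS cntS => /andP[_ /negbTE ->]; rewrite /cnt big_geq.
rewrite validS adjS cntS => /andP[/andP[ak pk] pk1].
rewrite (negbTE pk1) addn0.
case pkE : (p k).
  have vk : validn k p.
    case: k kK ak pk {pk1} pkE => [|k] kK ak pk pkE; first by apply/validnP.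
    by rewrite validS; move: ak; rewrite adjS pkE /= => /andP[-> /=]; case: (p k).
  have := IH k ltac:(lia) p vk.
  by rewrite cntS pkE /=; lia.
have := IH k.+1 ltac:(lia) p; rewrite validS ak pkE cntS pkE /= => /(_ isT).
lia.
Qed.

Lemma ellE k m (A : {set 'I_k}) :
  (A \in ell k m) = validn k (pn A) && (#|A| == m).
Proof.
rewrite /ell; case: eqP => [->|m0].
  rewrite inE cards_eq0; case: eqP => [->|_]; last by rewrite andbF.
  rewrite andbT; apply/esym/validnP => i ik.
  by have := pn_ord (set0 : {set 'I_k}) (Ordinal ik); rewrite /= inE => ->.
by rewrite inE -validSE -andbA; congr (_ && _); rewrite andbC.
Qed.

Definition Sg k (f : (nat -> bool) -> R) := \sum_(A : {set 'I_k}) f (pn A).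

Lemma chebN_S k x y : chebN k x y = Sg k (Wt k x y).
Proof.
rewrite /chebN /Sg.
under eq_bigr => m _ do rewrite big_mkcond mulr_sumr.
rewrite exchange_big /=; apply: eq_bigr => A _.
rewrite /Wt; case: ifP => V.
- rewrite (bigD1_seq #|A|); last by rewrite /index_iota iota_uniq.
    rewrite big1 => [|m /negbTE ne]; last by rewrite ellE V eq_sym ne mulr0.
    by rewrite ellE V eqxx /= addr0 mpow_bar mpow_A card_cnt mulrA.
  rewrite mem_index_iota /= ltnS -[#|A|]half_double; apply: half_leq.
  by rewrite -mul2n card_cnt; apply: cnt_bound.
- by rewrite big1 // => m _; rewrite ellE V mulr0.
Qed.

Definition extset k (P : {set 'I_k} * bool) : {set 'I_k.+1} :=
  [set j : 'I_k.+1 | if unlift ord_max j is Some i then i \in P.1 else P.2].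

Lemma pn_ext k (B : {set 'I_k}) b i :
  pn (extset (B, b)) i = (b && (i == k)) || pn B i.
Proof.
case: (ltngtP i k) => [ik|ki|->].
- have := pn_ord (extset (B, b)) (lift ord_max (Ordinal ik)).
  rewrite lift_max /= => ->; rewrite inE liftK /=.
  have := pn_ord B (Ordinal ik); rewrite /= => ->.
  by rewrite andbF.
- by rewrite !pn_ge ?andbF // ltnW.
- have := pn_ord (extset (B, b)) ord_max; rewrite /= => ->.
  by rewrite inE unlift_none andbT pn_ge // orbF.
Qed.

Lemma Sg_split k f :
  Sg k.+1 f = Sg k f + Sg k (fun p => f (fun i => (i == k) || p i)).
Proof.
pose g (A : {set 'I_k.+1}) := ([set i : 'I_k | lift ord_max i \in A], ord_max \in A).
have hK : cancel g (@extset k).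
  move=> A; apply/setP => j; rewrite inE.
  by case: (unliftP ord_max j) => [i ->|->]; rewrite /= ?inE.
have gK : cancel (@extset k) g.
  move=> [B b]; rewrite /g; congr pair.
    by apply/setP => i; rewrite !inE liftK.
  by rewrite inE unlift_none.
rewrite /Sg (reindex (@extset k)); last by exists g => ? _; [apply: gK|apply: hK].
transitivity (\sum_(B : {set 'I_k}) \sum_(b : bool) f (pn (extset (B, b)))).
  by rewrite pair_big; apply: eq_big => // -[B b].
rewrite -big_split; apply: eq_bigr => B _; rewrite big_bool /= addrC.
congr (f _ + f _); apply: functional_extensionality => i; rewrite pn_ext //.
Qed.

Lemma Wa k x y p : (forall i, (k <= i)%N -> p i = false) ->
  Wt k.+2 x y p = x k.+2 * Wt k.+1 x y p.
Proof.
move=> sp; rewrite /Wt !validS adjS (sp k) // (sp k.+1) //= andbT.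
case: (adj k p); last by rewrite mulr0.
rewrite cntS (sp k.+1) // addn0 XpS YpS /nbar (sp k.+1) //= (sp k) //=.
ring.
Qed.

Lemma Wb k x y p : (forall i, (k <= i)%N -> p i = false) ->
  Wt k.+2 x y (fun i => (i == k) || p i) = - y k.+1 * Wt k x y p.
Proof.
move=> sp; set q := fun i => _.
have qk : q k = true by rewrite /q eqxx.
have qk1 : q k.+1 = false by rewrite /q (sp k.+1) // orbF (gtn_eqF (ltnSn k)).
have qlt : forall i, (i < k)%N -> q i = p i by move=> i ik; rewrite /q (ltn_eqF ik).
have vq : adj k q = validn k p.
  case: k sp q qk qk1 qlt => [|k] sp q qk qk1 qlt; first by rewrite /adj /validn !big_geq.
  rewrite adjS validS (qlt k) // qk /= implybF; congr (_ && _).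
  by apply: eq_big_nat => i /andP[_ ik]; rewrite !qlt //; lia.
have cq : cnt k q = cnt k p.
  by apply: eq_big_nat => i /andP[_ ik]; rewrite qlt.
have xq : Xp k x q = Xp k x p.
  apply: eq_big_nat => i /andP[_ ik]; rewrite /nbar !qlt //; lia.
have yq : Yp k y q = Yp k y p.
  by apply: eq_big_nat => i /andP[_ ik]; rewrite qlt.
rewrite /Wt validS adjS qk qk1 /= andbT vq.
case: (validn k p); last by rewrite mulr0.
rewrite !cntS qk qk1 addn0 addn1 cq !XpS !YpS xq yq /nbar qk qk1 /= exprS.
ring.
Qed.

Lemma Wc k x y p : Wt k.+1 x y (fun i => (i == k) || p i) = 0.
Proof. by rewrite /Wt validS eqxx /= andbF. Qed.

Lemma Wt0 x y p : Wt 0 x y p = 1.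
Proof. by rewrite /Wt /validn /cnt /Xp /Yp !big_geq // expr0 !mulr1. Qed.

Lemma Wt1 x y p : p 0%N = false -> Wt 1 x y p = x 1%N.
Proof.
move=> p0; rewrite /Wt validS /adj big_geq // p0 /= cntS /cnt big_geq // p0.
rewrite XpS YpS /Xp /Yp !big_geq // /nbar p0 /=.
by rewrite expr0 !mul1r mulr1.
Qed.

Lemma Sg0 f : Sg 0 f = f (pn (set0 : {set 'I_0})).
Proof.
by rewrite /Sg (big_pred1 set0) // => A; symmetry; apply/eqP/setP => -[].
Qed.

Lemma chebN0 x y : chebN 0 x y = 1.
Proof. by rewrite chebN_S Sg0 Wt0. Qed.

Lemma chebN1 x y : chebN 1 x y = x 1%N.
Proof.
rewrite chebN_S Sg_split Sg0 Wt1; last by rewrite pn_ge.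
by rewrite [X in _ + X]big1 ?addr0 // => B _; apply: Wc.
Qed.

Lemma chebNS k x y :
  chebN k.+2 x y = x k.+2 * chebN k.+1 x y - y k.+1 * chebN k x y.
Proof.
rewrite !chebN_S (Sg_split k.+1 (Wt k.+2 x y)).
rewrite [X in _ + X]big1 ?addr0; last by move=> B _; apply: Wc.
rewrite (Sg_split k (Wt k.+2 x y)) (Sg_split k (Wt k.+1 x y)).
rewrite [X in _ * (_ + X)]big1 ?addr0; last by move=> B _; apply: Wc.
rewrite /Sg !mulr_sumr -sumrB -big_split /=; apply: eq_bigr => B _.
rewrite Wa ?Wb; try by move=> i; apply: pn_ge.
by rewrite mulNr.
Qed.
End Comb.

Section Cheb2.
Variable R : comRingType.
Implicit Types (x y : nat -> R).

Lemma shift0 x : shiftseq x 0 = x.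
Proof. by apply: functional_extensionality => j; rewrite /shiftseq addn0. Qed.

Lemma shift1 x i : shiftseq (shiftseq x i) 1 = shiftseq x i.+1.
Proof. by apply: functional_extensionality => j; rewrite /shiftseq; congr x; lia. Qed.

Lemma shift2 x i : shiftseq (shiftseq x i) 2 = shiftseq x i.+2.
Proof. by apply: functional_extensionality => j; rewrite /shiftseq; congr x; lia. Qed.

Lemma PoszS1 m : Posz m.+1 - 1 = Posz m.
Proof. lia. Qed.

Lemma PoszS2 m : Posz m.+1 - 2 = Posz m - 1.
Proof. lia. Qed.

Lemma cheb_neg (z : int) x y : (z < 0)%R -> cheb z x y = 0.
Proof. by case: z => // n H; lia. Qed.

Lemma cheb_m1 x y : cheb (Posz 0 - 1) x y = 0.
Proof. by apply: cheb_neg; lia. Qed.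

Lemma chebN_front m : forall x y,
  chebN m.+2 x y = x 1%N * chebN m.+1 (shiftseq x 1) (shiftseq y 1)
                   - y 1%N * chebN m (shiftseq x 2) (shiftseq y 2).
Proof.
suff H : forall m, (forall x y,
  chebN m.+2 x y = x 1%N * chebN m.+1 (shiftseq x 1) (shiftseq y 1)
                   - y 1%N * chebN m (shiftseq x 2) (shiftseq y 2)) /\
  (forall x y,
  chebN m.+3 x y = x 1%N * chebN m.+2 (shiftseq x 1) (shiftseq y 1)
                   - y 1%N * chebN m.+1 (shiftseq x 2) (shiftseq y 2)).
  exact: (H m).1.
elim=> [|k [IH0 IH1]].
  split=> x y.
    rewrite chebNS !chebN1 !chebN0.
    have -> : shiftseq x 1 1 = x 2 by [].
    ring.
  rewrite chebNS (chebNS 0) !chebN1 !chebN0 (chebNS 0 (shiftseq x 1)) !chebN1 !chebN0.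
  have -> : shiftseq x 1 2 = x 3 by [].
  have -> : shiftseq x 1 1 = x 2 by [].
  have -> : shiftseq x 2 1 = x 3 by [].
  have -> : shiftseq y 1 1 = y 2 by [].
  ring.
split=> // x y.
rewrite (chebNS k.+2 x y) (IH1 x y) (IH0 x y) (chebNS k.+1 (shiftseq x 1)) (chebNS k (shiftseq x 2)).
have -> : shiftseq x 1 k.+3 = x k.+4 by rewrite /shiftseq addn1.
have -> : shiftseq y 1 k.+2 = y k.+3 by rewrite /shiftseq addn1.
have -> : shiftseq x 2 k.+2 = x k.+4 by rewrite /shiftseq addn2.
have -> : shiftseq y 2 k.+1 = y k.+3 by rewrite /shiftseq addn2.
ring.
Qed.

Lemma cheb_back (m : nat) x y :
  cheb (Posz m.+1) x y = x m.+1 * cheb (Posz m) x y - y m * cheb (Posz m - 1) x y.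
Proof.
case: m => [|m]; first by rewrite cheb_m1 /= chebN1 chebN0 mulr1 mulr0 subr0.
by rewrite PoszS1 /= chebNS.
Qed.

Lemma cheb_front (m : nat) x y :
  cheb (Posz m.+1) x y = x 1%N * cheb (Posz m) (shiftseq x 1) (shiftseq y 1)
      - y 1%N * cheb (Posz m - 1) (shiftseq x 2) (shiftseq y 2).
Proof.
case: m => [|m]; first by rewrite cheb_m1 /= chebN1 chebN0 mulr1 mulr0 subr0.
by rewrite PoszS1 /= chebN_front.
Qed.

Variables a b c : nat -> R.

Lemma PhiJ_S j : PhiJ a b c j.+1 = b 0%N * cheb (Posz j) b (pwmul a c)
   - a 0%N * c 0%N * cheb (Posz j - 1) (shiftseq b 1) (shiftseq (pwmul a c) 1).
Proof. by rewrite /PhiJ -[j.+1 == 0]/false PoszS1 PoszS2. Qed.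

Lemma PhiJ_rec j : PhiJ a b c j.+2 = b j.+1 * PhiJ a b c j.+1 - a j * c j * PhiJ a b c j.
Proof.
case: j => [|i].
  rewrite !PhiJ_S PoszS1 cheb_m1 /= chebN1 !chebN0 /PhiJ /=.
  ring.
rewrite !PhiJ_S !PoszS1 (cheb_back i.+1 b) (cheb_back i (shiftseq b 1)) !PoszS1.
have -> : shiftseq b 1 i.+1 = b i.+2 by rewrite /shiftseq addn1.
have -> : shiftseq (pwmul a c) 1 i = a i.+1 * c i.+1 by rewrite /shiftseq /pwmul addn1.
rewrite /pwmul.
ring.
Qed.

Lemma PsiJ_eq n j d : n = (j + d)%N -> PsiJ n a b c j =
  b n.+1 * cheb (Posz d) (shiftseq b j) (shiftseq (pwmul a c) j)
  - a n * c n * cheb (Posz d - 1) (shiftseq b j) (shiftseq (pwmul a c) j).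
Proof.
move=> -> {n}; rewrite /PsiJ ifF; last by apply/eqP; lia.
have -> : Posz (j + d) - Posz j = Posz d by lia.
by [].
Qed.

Lemma PsiJ_last n : PsiJ n a b c n.+1 = 1.
Proof. by rewrite /PsiJ eqxx. Qed.

Lemma PsiJ_rec n j : (j.+1 <= n)%N ->
  PsiJ n a b c j = b j.+1 * PsiJ n a b c j.+1 - a j.+1 * c j.+1 * PsiJ n a b c j.+2.
Proof.
move=> jn; have [d ->] : exists d, n = (j + d.+1)%N by exists (n - j.+1)%N; lia.
case: d => [|e].
  rewrite addn1 PsiJ_last (PsiJ_eq (d := 1)) ?addn1 // (PsiJ_eq (d := 0)) ?addn0 //.
  rewrite PoszS1 cheb_m1 /= chebN1 !chebN0.
  have -> : shiftseq b j 1 = b j.+1 by rewrite /shiftseq add1n.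
  ring.
rewrite (PsiJ_eq (d := e.+2)) // (PsiJ_eq (d := e.+1)) ?addSnnS //.
rewrite (PsiJ_eq (d := e)); last by lia.
rewrite (cheb_front e.+1 (shiftseq b j)) (cheb_front e (shiftseq b j)).
rewrite !shift1 !shift2 !PoszS1.
have -> : shiftseq b j 1 = b j.+1 by rewrite /shiftseq add1n.
have -> : shiftseq (pwmul a c) j 1 = a j.+1 * c j.+1 by rewrite /shiftseq /pwmul add1n.
ring.
Qed.
End Cheb2.

Lemma prod_neq0 (R : idomainType) (F : nat -> R) m n :
  (forall s, (m <= s < n)%N -> F s != 0) -> \prod_(m <= s < n) F s != 0.
Proof.
move=> H; rewrite prodf_seq_neq0; apply/allP => s; rewrite mem_index_iota => hs.
exact: H.
Qed.

Unset Implicit Arguments.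
Theorem lemma4p1 (R : realFieldType) (n : nat) (a b c Phi Psi : nat -> R) :
  (1 <= n)%N ->
  (forall k, (k <= n)%N -> a k != 0 /\ c k != 0) ->
  (forall k, (1 <= k <= n)%N ->
     - a k * Phi k.+1 + b k * Phi k - c k.-1 * Phi k.-1 = 0) ->
  Phi 0%N = a 0%N -> Phi 1%N = b 0%N ->
  (forall k, (1 <= k <= n)%N ->
     - a k * Psi k.+1 + b k * Psi k - c k.-1 * Psi k.-1 = 0) ->
  Psi n = b n.+1 -> Psi n.+1 = c n ->
  (forall k, (k <= n.+1)%N ->
     Phi k = a 0%N * (\prod_(0 <= s < k) a s)^-1 * PhiJ a b c k /\
     Psi k = c n * (\prod_(k <= s < n.+1) c s)^-1 * PsiJ n a b c k) /\
  b 0%N * Psi 0%N - a 0%N * Psi 1%N = DJ n a b c * (\prod_(0 <= s < n) c s)^-1.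
Proof.
move=> n1 nz HPhi Phi0 Phi1 HPsi Psin Psin1.
have anz k : (k <= n)%N -> a k != 0 by move=> /nz[].
have cnz k : (k <= n)%N -> c k != 0 by move=> /nz[].
have PhiC : forall k, (k <= n)%N ->
   (Phi k = a 0%N * (\prod_(0 <= s < k) a s)^-1 * PhiJ a b c k) /\
   (Phi k.+1 = a 0%N * (\prod_(0 <= s < k.+1) a s)^-1 * PhiJ a b c k.+1).
  elim=> [|k IH] kn.
    split.
      by rewrite big_geq // invr1 mulr1 /PhiJ /= mulr1.
    rewrite big_nat1 PhiJ_S cheb_m1 /= chebN0 mulr0 subr0 mulr1 mulfV ?mul1r //.
    exact: anz.
  have [IH0 IH1] := IH (ltnW kn); split => //.
  have ak1 := anz _ kn.
  have ak : a k != 0 by apply: anz; lia.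
  have pk : \prod_(0 <= s < k) a s != 0 by apply: prod_neq0 => s hs; apply: anz; lia.
  have H := HPhi k.+1 ltac:(lia); rewrite /= in H.
  have e : Phi k.+2 = (b k.+1 * Phi k.+1 - c k * Phi k) / a k.+1.
    apply: (mulIf ak1); rewrite divfK //.
    transitivity (Phi k.+2 * a k.+1 + (- a k.+1 * Phi k.+2 + b k.+1 * Phi k.+1 - c k * Phi k)).
      by rewrite H addr0.
    ring.
  rewrite e IH0 IH1 PhiJ_rec !big_nat_recr //=.
  field.
  by rewrite pk ak ak1.
have PsiC : forall i j, (i + j = n)%N ->
   (Psi j = c n * (\prod_(j <= s < n.+1) c s)^-1 * PsiJ n a b c j) /\
   (Psi j.+1 = c n * (\prod_(j.+1 <= s < n.+1) c s)^-1 * PsiJ n a b c j.+1).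
  elim=> [|i IH] j ij.
    rewrite add0n in ij; subst j; split.
      rewrite big_nat1 (@PsiJ_eq _ a b c n n 0) ?addn0 // cheb_m1 /= chebN0 mulr0 subr0.
      by rewrite mulr1 mulfV ?mul1r // cnz.
    by rewrite big_geq // invr1 mulr1 PsiJ_last mulr1.
  have [IH0 IH1] := IH j.+1 ltac:(lia); split => //.
  have cj : c j != 0 by apply: cnz; lia.
  have cj1 : c j.+1 != 0 by apply: cnz; lia.
  have pk : \prod_(j.+2 <= s < n.+1) c s != 0 by apply: prod_neq0 => s hs; apply: cnz; lia.
  have H := HPsi j.+1 ltac:(lia); rewrite /= in H.
  have e : Psi j = (b j.+1 * Psi j.+1 - a j.+1 * Psi j.+2) / c j.
    apply: (mulIf cj); rewrite divfK //.
    transitivity (Psi j * c j + (- a j.+1 * Psi j.+2 + b j.+1 * Psi j.+1 - c j * Psi j)).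
      by rewrite H addr0.
    ring.
  rewrite e IH0 IH1 (@PsiJ_rec _ a b c n j); last by lia.
  rewrite [\prod_(j <= s < n.+1) _]big_ltn; last by lia.
  rewrite [\prod_(j.+1 <= s < n.+1) _]big_ltn; last by lia.
  field.
  by rewrite pk cj cj1.
have Claim : forall k, (k <= n.+1)%N ->
     Phi k = a 0%N * (\prod_(0 <= s < k) a s)^-1 * PhiJ a b c k /\
     Psi k = c n * (\prod_(k <= s < n.+1) c s)^-1 * PsiJ n a b c k.
  move=> k kn; split.
    by case: k kn => [|k] kn; [exact: (PhiC 0%N _).1 | exact: (PhiC k _).2].
  case: (ltngtP k n.+1) kn => // [kn|->] _.
    by apply: (PsiC (n - k)%N k _).1; lia.
  exact: (PsiC 0%N n _).2.
split => //.
have [_ Ps0] := Claim 0%N isT.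
have [_ Ps1] := Claim 1%N ltac:(lia).
rewrite Ps0 Ps1.
case: n n1 nz HPhi HPsi Psin Psin1 anz cnz PhiC PsiC Claim Ps0 Ps1 => // n _ nz HPhi HPsi Psin Psin1 anz cnz PhiC PsiC Claim Ps0 Ps1.
rewrite (@PsiJ_eq _ a b c n.+1 0 n.+1) // (@PsiJ_eq _ a b c n.+1 1 n) //.
rewrite /DJ !shift0 !PoszS1 PoszS2.
have c0 : c 0%N != 0 by apply: cnz.
have cn : c n.+1 != 0 by apply: cnz.
have pk : \prod_(1 <= s < n.+1) c s != 0 by apply: prod_neq0 => s hs; apply: cnz; lia.
rewrite [\prod_(0 <= s < n.+2) _]big_ltn // [\prod_(0 <= s < n.+1) _]big_ltn //.
rewrite big_nat_recr //=.
field.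
by rewrite pk c0 cn.
Qed.
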